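(* Let $G=(V,E)$ be a finite simple undirected graph with zipper constraint collection $\mathcal{Z}$, let $D\subseteq Z^2$, and let $\mathbb{S}$ be a downstream-enabled prescription on $D$. Suppose $\mathcal{K}^+$ is a minimum-cardinality clique cover of the augmented graph $G^+(\mathbb{S})$. Then there is a clique cover $\mathcal{K}$ of $G$ with the following properties: (i) $\mathcal{K}$ is faithful to $\mathbb{S}$; (ii) $\mathcal{K}$ satisfies every zipper constraint $(U,W,y)\in\mathcal{Z}$ with $U,W\in D$; (iii) $|\mathcal{K}|=|\mathcal{K}^+|$; and (iv) there is no clique cover $\mathcal{K}_h$ of $G$ that is faithful to $\mathbb{S}$ and has $|\mathcal{K}_h|<|\mathcal{K}|$.
   Context: A clique cover of a graph is a collection of cliques whose union is the vertex set. A zipper constraint collection is a finite set $\mathcal{Z}=\{(U_1,W_1,y_1),\dots,(U_m,W_m,y_m)\}$, where each $U_i,W_i\in E$ is an edge of $G$ and each $y_i$ is a label. A clique cover $\mathcal{K}$ satisfies $(U,W,y)$ if either no clique of $\mathcal{K}$ contains $U$, or some clique of $\mathcal{K}$ contains $W$. Let $Z^2=\{U_1,\dots,U_m,W_1,\dots,W_m\}$. Write $P\uparrow Q$ if $(P,Q,y)\in\mathcal{Z}$ for some $y$, and let $\rightsquigarrow$ be the transitive closure of $\uparrow$ on $Z^2$. A prescription on $D\subseteq Z^2$ is a subset $\mathbb{S}\subseteq D$. It is downstream enabled if, whenever $P_a\in\mathbb{S}$ and $P_a\rightsquigarrow P_b$, we have $P_b\in\mathbb{S}$ or $P_b\notin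 D$. A clique cover $\mathcal{K}$ of $G$ is faithful to $\mathbb{S}$ if every $P\in\mathbb{S}$ lies in some clique of $\mathcal{K}$ and no $P\in D\setminus\mathbb{S}$ lies in any clique of $\mathcal{K}$. Let $G'=(V,E\setminus(D\setminus\mathbb{S}))$. The augmented graph $G^+(\mathbb{S})$ has vertex set $\{[u]:u\in V\}\cup\{[u,w]:\{u,w\}\in\mathbb{S}\}$, where each $[A]$ is a new formal vertex labeled by the set $A$. Two distinct vertices $[A],[B]$ are adjacent if and only if $A\cup B$ is a clique in $G'$. *)

(* Defs.v *)
From Stdlib Require Import Relations.
From mathcomp Require Import all_boot.
Set Implicit Arguments. Unset Strict Implicit. Unset Printing Implicit Defensive.

Section Defs.

Variable X : finType.

Definition is_clique (Vs : {set X}) (r : rel X) (C : {set X}) : Prop :=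
  C != set0 /\ C \subset Vs /\
  (forall x y, x \in C -> y \in C -> x != y -> r x y).

Definition clique_cover (Vs : {set X}) (r : rel X) (K : {set {set X}}) : Prop :=
  (forall C, C \in K -> is_clique Vs r C) /\ \bigcup_(C in K) C = Vs.

Definition min_clique_cover (Vs : {set X}) (r : rel X) (K : {set {set X}}) : Prop :=
  clique_cover Vs r K /\
  forall K', clique_cover Vs r K' -> #|K| <= #|K'|.

End Defs.

Section Zipper.
Variable T : finType.
Variable e : rel T.     (* adjacency of G (assumed symmetric, irreflexive) *)
Variable L : finType.

(* edge {u,w} of G, represented as a two-element vertex set *)
Definition is_edge (A : {set T}) : Prop :=
  exists u w, u != w /\ e u w /\ A = [set u; w].

Definition zipper := ({set T} * {set T} * L)%type.

Definition Z2 (Z : {set zipper}) : {set {set T}} :=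
  [set z.1.1 | z in Z] :|: [set z.1.2 | z in Z].

Definition up (Z : {set zipper}) (P Q : {set T}) : Prop :=
  exists y, (P, Q, y) \in Z.

Definition reach (Z : {set zipper}) : relation {set T} := clos_trans _ (up Z).

Definition downstream_enabled (Z : {set zipper}) (D S : {set {set T}}) : Prop :=
  S \subset D /\
  forall Pa Pb, Pa \in S -> reach Z Pa Pb -> Pb \in S \/ Pb \notin D.

Definition faithful (D S : {set {set T}}) (K : {set {set T}}) : Prop :=
  (forall P, P \in S -> exists2 C, C \in K & P \subset C) /\
  (forall P, P \in D :\: S -> forall C, C \in K -> ~~ (P \subset C)).

Definition satisfies (K : {set {set T}}) (z : zipper) : Prop :=
  (forall C, C \in K -> ~~ (z.1.1 \subset C)) \/
  (exists2 C, C \in K & z.1.2 \subset C).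

Definition adjG' (D S : {set {set T}}) : rel T :=
  fun x y => e x y && ([set x; y] \notin D :\: S).

Definition is_clique_G' (D S : {set {set T}}) (A : {set T}) : bool :=
  [forall x in A, forall y in A, (x != y) ==> adjG' D S x y].

(* Augmented graph G^+(S): formal vertex [A] is represented by its label set A;
   the vertex set is {[u] : u in V} ∪ {[u,w] : {u,w} in S} (labels of the two kinds
   have sizes 1 and 2, so they are distinct). *)
Definition Vplus (S : {set {set T}}) : {set {set T}} :=
  [set [set u] | u : T] :|: S.

Definition adjplus (D S : {set {set T}}) : rel {set T} :=
  fun A B => (A != B) && is_clique_G' D S (A :|: B).

End Zipper.

(* Main.v *)
Require Import Defs.
From mathcomp Require Import all_boot.
From mathcomp Require Import zify.

Lemma cliqueG'P (T : finType) (e : rel T) (D S : {set {set T}}) (A : {set T}) :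
  reflect (forall x y, x \in A -> y \in A -> x != y -> adjG' e D S x y)
          (is_clique_G' e D S A).
Proof.
apply: (iffP forall_inP) => H x.
- move=> y xA yA; move/forall_inP: (H x xA) => /(_ y yA) /implyP; exact.
- move=> xA; apply/forall_inP => y yA; apply/implyP; exact: H.
Qed.

Lemma cliqueG'_sub (T : finType) (e : rel T) (D S : {set {set T}}) (A B : {set T}) :
  A \subset B -> is_clique_G' e D S B -> is_clique_G' e D S A.
Proof.
move=> AB /cliqueG'P H; apply/cliqueG'P => x y xA yA; apply: H; exact: (subsetP AB).
Qed.

Arguments cliqueG'_sub {T e D S A B}.

Theorem lemma5 (T : finType) (e : rel T) (L : finType)
  (e_sym : symmetric e) (e_irr : irreflexive e)
  (Z : {set zipper T L})
  (Z_edges : forall z, z \in Z -> is_edge e z.1.1 /\ is_edge e z.1.2)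
  (D S : {set {set T}})
  (HD : D \subset Z2 Z)
  (HS : downstream_enabled Z D S)
  (Kp : {set {set {set T}}})
  (HKp : min_clique_cover (Vplus S) (adjplus e D S) Kp) :
  exists K : {set {set T}},
    [/\ clique_cover [set: T] e K,
        faithful D S K,
        (forall z, z \in Z -> z.1.1 \in D -> z.1.2 \in D -> satisfies K z),
        #|K| = #|Kp| &
        ~ (exists Kh : {set {set T}},
             [/\ clique_cover [set: T] e Kh, faithful D S Kh & #|Kh| < #|K|])].
Proof.
case: HS => SsubD Hdown.
case: HKp => [[Kpcl Kpcov] Kpmin].
have Dedge : forall P, P \in D -> exists u w, [/\ u != w, e u w & P = [set u; w]].
  move=> P /(subsetP HD); rewrite /Z2 inE => /orP[] /imsetP[z zZ ->].
  - by have [[u [w [? [? ?]]]] _] := Z_edges z zZ; exists u, w.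
  - by have [_ [u [w [? [? ?]]]]] := Z_edges z zZ; exists u, w.
have Vcl : forall A, A \in Vplus S -> is_clique_G' e D S A.
  move=> A; rewrite /Vplus inE => /orP[/imsetP[u _ ->]|AS].
  - apply/cliqueG'P => x y; rewrite !inE => /eqP -> /eqP ->; by rewrite eqxx.
  - have [u [w [uw euw AE]]] := Dedge A (subsetP SsubD A AS).
    have nD : [set u; w] \notin D :\: S by rewrite -AE inE AS.
    apply/cliqueG'P => x y; rewrite AE !inE => /orP[] /eqP -> /orP[] /eqP -> //;
      rewrite ?eqxx // => _; rewrite /adjG'.
    + by rewrite euw nD.
    + by rewrite e_sym euw setUC nD.
have Vne : forall A, A \in Vplus S -> exists x, x \in A.
  move=> A; rewrite /Vplus inE => /orP[/imsetP[u _ ->]|AS].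
  - by exists u; exact: set11.
  - have [u [w [uw euw AE]]] := Dedge A (subsetP SsubD A AS).
    by exists u; rewrite AE !inE eqxx.
pose UC (C : {set {set T}}) := \bigcup_(A in C) A.
have UCcl : forall C, C \in Kp -> is_clique_G' e D S (UC C).
  move=> C CK; have [_ [CV Cadj]] := Kpcl C CK.
  apply/cliqueG'P => x y /bigcupP[A AC xA] /bigcupP[B BC yB] xy.
  case: (eqVneq A B) => [AB|AB].
  - subst B; move/cliqueG'P: (Vcl A (subsetP CV A AC)); by apply.
  - have /andP[_ /cliqueG'P H] := Cadj A B AC BC AB.
    by apply: H; rewrite ?inE ?xA ?yB ?orbT.
have UCinj : {in Kp &, injective UC}.
  move=> C1 C2 C1K C2K eqU; apply/eqP/negPn/negP => neq.
  pose K' := (Kp :\ C1 :\ C2) :|: [set C1 :|: C2].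
  have cov' : clique_cover (Vplus S) (adjplus e D S) K'.
    split.
    - move=> C; rewrite /K' !inE => /orP[/andP[_ /andP[_ CK]]|/eqP ->]; first exact: Kpcl.
      have [C1ne [C1V _]] := Kpcl C1 C1K.
      have [_ [C2V _]] := Kpcl C2 C2K.
      split; [|split].
      + apply: contra C1ne => /eqP H; apply/eqP/setP => A; rewrite inE.
        apply/negP => AC1; have : A \in C1 :|: C2 by rewrite inE AC1.
        by rewrite H inE.
      + by rewrite subUset C1V C2V.
      + move=> A B AC BC AB; rewrite /adjplus AB /=.
        have sub1 : forall X, X \in C1 :|: C2 -> X \subset UC C1.
          move=> X; rewrite inE => /orP[] XC; first exact: bigcup_sup.
          by rewrite eqU; exact: bigcup_sup.
        apply: (cliqueG'_sub _ (UCcl C1 C1K)).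
        by rewrite subUset !sub1.
    - rewrite -Kpcov; apply/setP => A; apply/bigcupP/bigcupP.
      + move=> [C]; rewrite /K' !inE => /orP[/andP[_ /andP[_ CK]] AC|/eqP -> ].
        * by exists C.
        * by rewrite inE => /orP[] AC; [exists C1|exists C2].
      + move=> [C CK AC].
        case: (eqVneq C C1) => [E|n1]; first by exists (C1 :|: C2); rewrite !inE ?eqxx ?orbT // -E AC.
        case: (eqVneq C C2) => [E|n2]; first by exists (C1 :|: C2); rewrite !inE ?eqxx ?orbT // -E AC ?orbT.
        by exists C => //; rewrite !inE n1 n2 CK.
  have := Kpmin K' cov'.
  have c1 := cardsD1 C1 Kp; have c2 := cardsD1 C2 (Kp :\ C1).
  have h2 : C2 \in Kp :\ C1 by rewrite !inE C2K eq_sym neq.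
  rewrite C1K in c1; rewrite h2 in c2.
  have := leq_card_setU (Kp :\ C1 :\ C2) [set C1 :|: C2]; rewrite cards1 /K'.
  move=> [H1 _] H2; have := leq_trans H2 H1.
  by rewrite c1 c2 addnC ltnn.
have faithK : faithful D S (UC @: Kp).
  split.
  - move=> P PS; have : P \in Vplus S by rewrite /Vplus inE PS orbT.
    rewrite -Kpcov => /bigcupP[C0 C0K PC0].
    by exists (UC C0); [exact: imset_f | exact: bigcup_sup].
  - move=> P PDS C /imsetP[C0 C0K ->]; apply/negP => PC.
    have PD : P \in D by move: PDS; rewrite inE => /andP[].
    have [u [w [uw euw PE]]] := Dedge P PD.
    move/cliqueG'P: (UCcl C0 C0K) => /(_ u w) H.
    have : adjG' e D S u w.
      by apply: H => //; apply: (subsetP PC); rewrite PE !inE eqxx ?orbT.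
    by rewrite /adjG' -PE PDS andbF.
exists (UC @: Kp); split => //.
- split.
  + move=> C /imsetP[C0 C0K ->]; have [C0ne [C0V _]] := Kpcl C0 C0K.
    split; [|split].
    * have [A AC0] := set0Pn _ C0ne; have [x xA] := Vne A (subsetP C0V A AC0).
      by apply/set0Pn; exists x; apply/bigcupP; exists A.
    * exact: subsetT.
    * move=> x y xC yC xy; move/cliqueG'P: (UCcl C0 C0K) => /(_ x y xC yC xy).
      by case/andP.
  + apply/setP => x; rewrite inE; apply/bigcupP.
    have : [set x] \in Vplus S by rewrite /Vplus inE imset_f.
    rewrite -Kpcov => /bigcupP[C0 C0K xC0].
    exists (UC C0); first exact: imset_f.
    by apply/bigcupP; exists [set x] => //; exact: set11.
- move=> z zZ z1D z2D; case: faithK => f1 f2.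
  case: (boolP (z.1.1 \in S)) => z1S.
  + right; apply: f1.
    have : reach Z z.1.1 z.1.2.
      apply: Relation_Operators.t_step; exists z.2.
      suff -> : (z.1.1, z.1.2, z.2) = z by [].
      by case: (z) => [[a b] y].
    by case/(Hdown _ _ z1S) => // ; rewrite z2D.
  + left => C CK; apply: f2 CK; by rewrite inE z1S z1D.
- exact: card_in_imset.
- move=> [Kh [[Khcl Khcov] [Khf1 Khf2] Khlt]].
  pose f := fun C : {set T} => [set A in Vplus S | A \subset C].
  have covf : clique_cover (Vplus S) (adjplus e D S) (f @: Kh).
    split.
    - move=> C /imsetP[C0 C0Kh ->]; have [C0ne [_ C0adj]] := Khcl C0 C0Kh.
      split; [|split].
      + have [x xC0] := set0Pn _ C0ne; apply/set0Pn; exists [set x].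
        by rewrite inE /Vplus inE imset_f // sub1set xC0.
      + by apply/subsetP => A; rewrite inE => /andP[].
      + move=> A B; rewrite !inE => /andP[_ AC] /andP[_ BC] AB.
        rewrite /adjplus AB /=; apply/cliqueG'P => x y xAB yAB xy.
        have ABC : A :|: B \subset C0 by rewrite subUset AC BC.
        have xC := subsetP ABC x xAB; have yC := subsetP ABC y yAB.
        rewrite /adjG' (C0adj x y xC yC xy) /=.
        apply/negP => H; have := Khf2 _ H C0 C0Kh.
        by rewrite subUset !sub1set xC yC.
    - apply/setP => A; apply/bigcupP/idP.
      + by move=> [C /imsetP[C0 _ ->]]; rewrite inE => /andP[].
      + move=> AV; have AV' := AV; move: AV'; rewrite /Vplus inE => /orP[/imsetP[u _ AE]|AS].
        * have : u \in [set: T] by rewrite inE.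
          rewrite -Khcov => /bigcupP[C0 C0Kh uC0].
          exists (f C0); first exact: imset_f.
          by rewrite inE AV AE sub1set.
        * have [C0 C0Kh PC0] := Khf1 A AS.
          by exists (f C0); [exact: imset_f | rewrite inE AV PC0].
  have h1 := Kpmin _ covf.
  have h2 := leq_imset_card f Kh.
  rewrite card_in_imset // in Khlt.
  have := leq_ltn_trans (leq_trans h1 h2) Khlt; by rewrite ltnn.
Qed.
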